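(* Let $T$ be a bimonad on a left closed monoidal category $\mathcal C$. (a) If $T$ admits a left antipode, it is unique. (b) If $T$ is a left Hopf monad, its left antipode $s^l$ satisfies, for all objects $X,Y,Z$: $s^l_{X,Y}\mu_{[TX,Y]^l}=[X,\mu_Y]^l\,s^l_{X,TY}\,T(s^l_{TX,Y})\,T^2[\mu_X,Y]^l$; $s^l_{X,Y}\eta_{[TX,Y]^l}=[\eta_X,\eta_Y]^l$; $s^l_{X\otimes Y,Z}\,T[T_2(X,Y),Z]^l=[X,s^l_{Y,Z}]^l\,s^l_{X,[TY,Z]^l}$; $s^l_{T\mathbb 1,X}[T_0,X]^l=\mathrm{id}_{TX}$, where the canonical isomorphisms $[X\otimes Y,Z]^l\cong[X,[Y,Z]^l]^l$ and $[\mathbb 1,X]^l\cong X$ are suppressed. (The analogous statements hold for right antipodes on right closed categories.)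
   Context: Monoidal categories are strict. A bimonad on $\mathcal C$ is a monad $(T,\mu,\eta)$ with a comonoidal structure $T_2(X,Y)\colon T(X\otimes Y)\to TX\otimes TY$, $T_0\colon T\mathbb 1\to\mathbb 1$ such that $\mu,\eta$ are comonoidal. $T$ is a left Hopf monad if $H^l_{X,Y}=(TX\otimes\mu_Y)T_2(X,TY)$ is invertible for all $X,Y$. A monoidal category is left closed if each $?\otimes X$ has a right adjoint $[X,?]^l$, with counit $\mathrm{ev}^X_Y\colon[X,Y]^l\otimes X\to Y$ and unit $\mathrm{coev}^X_Y\colon Y\to[X,Y\otimes X]^l$. A left antipode for $T$ is a natural transformation $s^l_{X,Y}\colon T[TX,Y]^l\to[X,TY]^l$ such that for all $X,Y$: (1) $T\big(\mathrm{ev}^X_Y([\eta_X,Y]^l\otimes X)\big)=\mathrm{ev}^{TX}_{TY}\big(s^l_{TX,Y}\,T[\mu_X,Y]^l\otimes TX\big)T_2([TX,Y]^l,X)$; (2) $[X,TY\otimes\eta_X]^l\,\mathrm{coev}^X_{TY}=[X,(TY\otimes\mu_X)T_2(Y,TX)]^l\,s^l_{X,Y\otimes TX}\,T(\mathrm{coev}^{TX}_Y)$. It is a known result that a bimonad on a left closed category is a left Hopf monad iff it admits a left antipode. *)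

(* Defs.v *)
(* Strictness is encoded by equalities of objects together with the
   corresponding equalities of morphisms up to transport along them. *)

Set Implicit Arguments.
Unset Strict Implicit.

Definition castH {O : Type} {H : O -> O -> Type} {X X' Y Y' : O}
  (e1 : X = X') (e2 : Y = Y') (f : H X Y) : H X' Y' :=
  match e1 in _ = a return H a Y' with
  | eq_refl => match e2 in _ = b return H X b with eq_refl => f end
  end.

Unset Implicit Arguments.
Record StrictMonCat := {
  ob :> Type;
  hom : ob -> ob -> Type;
  comp : forall X Y Z : ob, hom Y Z -> hom X Y -> hom X Z;
  idm : forall X : ob, hom X X;
  comp_assoc : forall (X Y Z W : ob) (f : hom Z W) (g : hom Y Z) (h : hom X Y),
      comp X Z W f (comp X Y Z g h) = comp X Y W (comp Y Z W f g) h;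
  comp_id_l : forall (X Y : ob) (f : hom X Y), comp X Y Y (idm Y) f = f;
  comp_id_r : forall (X Y : ob) (f : hom X Y), comp X X Y f (idm X) = f;
  tens : ob -> ob -> ob;
  tensm : forall X X' Y Y' : ob, hom X X' -> hom Y Y' -> hom (tens X Y) (tens X' Y');
  tensm_id : forall X Y : ob, tensm X X Y Y (idm X) (idm Y) = idm (tens X Y);
  tensm_comp : forall (X X' X'' Y Y' Y'' : ob)
      (f : hom X' X'') (f' : hom X X') (g : hom Y' Y'') (g' : hom Y Y'),
      tensm X X'' Y Y'' (comp X X' X'' f f') (comp Y Y' Y'' g g')
      = comp (tens X Y) (tens X' Y') (tens X'' Y'')
             (tensm X' X'' Y' Y'' f g) (tensm X X' Y Y' f' g');
  unit : ob;
  tens_assoc : forall X Y Z : ob, tens (tens X Y) Z = tens X (tens Y Z);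
  tens_unit_l : forall X : ob, tens unit X = X;
  tens_unit_r : forall X : ob, tens X unit = X;
  tensm_assoc : forall (X X' Y Y' Z Z' : ob) (f : hom X X') (g : hom Y Y') (h : hom Z Z'),
      castH (tens_assoc X Y Z) (tens_assoc X' Y' Z')
        (tensm (tens X Y) (tens X' Y') Z Z' (tensm X X' Y Y' f g) h)
      = tensm X X' (tens Y Z) (tens Y' Z') f (tensm Y Y' Z Z' g h);
  tensm_unit_l : forall (X Y : ob) (f : hom X Y),
      castH (tens_unit_l X) (tens_unit_l Y) (tensm unit unit X Y (idm unit) f) = f;
  tensm_unit_r : forall (X Y : ob) (f : hom X Y),
      castH (tens_unit_r X) (tens_unit_r Y) (tensm X Y unit unit f (idm unit)) = f
}.

Set Implicit Arguments.
Arguments hom {C} : rename.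
Arguments comp {C X Y Z} : rename.
Arguments idm {C} X : rename.
Arguments tens {C} : rename.
Arguments tensm {C X X' Y Y'} : rename.
Arguments unit {C} : rename.
Arguments tens_assoc {C} : rename.
Arguments tens_unit_l {C} : rename.
Arguments tens_unit_r {C} : rename.

Declare Scope cat_scope.
Delimit Scope cat_scope with cat.
Open Scope cat_scope.
Notation "g ∘ f" := (comp g f) (at level 40, left associativity) : cat_scope.
Notation "f ⊗ g" := (tensm f g) (at level 30, right associativity) : cat_scope.

Definition eqhom {C : StrictMonCat} {X Y : C} (e : X = Y) : hom X Y :=
  castH eq_refl e (idm X).

(* Left closed structure: for each X, the functor ? ⊗ X has a right adjoint
   [X,?]^l, given by the universal arrow ev^X_Y : [X,Y]^l ⊗ X -> Y. *)
Record LeftClosed (C : StrictMonCat) := {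
  ihom : C -> C -> C;
  ev : forall X Y : C, hom (tens (ihom X Y) X) Y;
  cur : forall A X Y : C, hom (tens A X) Y -> hom A (ihom X Y);
  cur_ev : forall (A X Y : C) (f : hom (tens A X) Y),
      ev X Y ∘ (cur f ⊗ idm X) = f;
  cur_uniq : forall (A X Y : C) (g : hom A (ihom X Y)),
      cur (ev X Y ∘ (g ⊗ idm X)) = g
}.
Arguments ihom {C} l X Y.
Arguments ev {C} l X Y.
Arguments cur {C} l {A X Y} f.

Section Closed.
Context {C : StrictMonCat} (L : LeftClosed C).

Definition coev (X Y : C) : hom Y (ihom L X (tens Y X)) :=
  cur L (idm (tens Y X)).

Definition ihom_map {X X' Y Y' : C} (f : hom X' X) (g : hom Y Y')
  : hom (ihom L X Y) (ihom L X' Y') :=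
  cur L (g ∘ ev L X Y ∘ (idm (ihom L X Y) ⊗ f)).

Definition ihom_curry (X Y Z : C)
  : hom (ihom L (tens X Y) Z) (ihom L X (ihom L Y Z)) :=
  cur L (cur L (ev L (tens X Y) Z ∘ eqhom (tens_assoc (ihom L (tens X Y) Z) X Y))).

Definition ihom_unit (X : C) : hom (ihom L unit X) X :=
  ev L unit X ∘ eqhom (eq_sym (tens_unit_r (ihom L unit X))).
Definition ihom_unit_inv (X : C) : hom X (ihom L unit X) :=
  cur L (eqhom (tens_unit_r X)).
End Closed.

Record Bimonad (C : StrictMonCat) := {
  Tob : C -> C;
  Tmor : forall X Y : C, hom X Y -> hom (Tob X) (Tob Y);
  Tmor_id : forall X : C, Tmor (idm X) = idm (Tob X);
  Tmor_comp : forall (X Y Z : C) (g : hom Y Z) (f : hom X Y),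
      Tmor (g ∘ f) = Tmor g ∘ Tmor f;
  mu : forall X : C, hom (Tob (Tob X)) (Tob X);
  eta : forall X : C, hom X (Tob X);
  mu_nat : forall (X Y : C) (f : hom X Y), Tmor f ∘ mu X = mu Y ∘ Tmor (Tmor f);
  eta_nat : forall (X Y : C) (f : hom X Y), Tmor f ∘ eta X = eta Y ∘ f;
  mu_assoc : forall X : C, mu X ∘ Tmor (mu X) = mu X ∘ mu (Tob X);
  mu_eta_l : forall X : C, mu X ∘ eta (Tob X) = idm (Tob X);
  mu_eta_r : forall X : C, mu X ∘ Tmor (eta X) = idm (Tob X);
  T2 : forall X Y : C, hom (Tob (tens X Y)) (tens (Tob X) (Tob Y));
  T0 : hom (Tob unit) unit;
  T2_nat : forall (X X' Y Y' : C) (f : hom X X') (g : hom Y Y'),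
      T2 X' Y' ∘ Tmor (f ⊗ g) = (Tmor f ⊗ Tmor g) ∘ T2 X Y;
  T2_coassoc : forall X Y Z : C,
      castH (f_equal Tob (tens_assoc X Y Z)) (tens_assoc (Tob X) (Tob Y) (Tob Z))
        ((T2 X Y ⊗ idm (Tob Z)) ∘ T2 (tens X Y) Z)
      = (idm (Tob X) ⊗ T2 Y Z) ∘ T2 X (tens Y Z);
  T2_counit_l : forall X : C,
      castH (f_equal Tob (tens_unit_l X)) (tens_unit_l (Tob X))
        ((T0 ⊗ idm (Tob X)) ∘ T2 unit X) = idm (Tob X);
  T2_counit_r : forall X : C,
      castH (f_equal Tob (tens_unit_r X)) (tens_unit_r (Tob X))
        ((idm (Tob X) ⊗ T0) ∘ T2 X unit) = idm (Tob X);
  mu_T2 : forall X Y : C,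
      T2 X Y ∘ mu (tens X Y) = (mu X ⊗ mu Y) ∘ T2 (Tob X) (Tob Y) ∘ Tmor (T2 X Y);
  mu_T0 : T0 ∘ mu unit = T0 ∘ Tmor T0;
  eta_T2 : forall X Y : C, T2 X Y ∘ eta (tens X Y) = eta X ⊗ eta Y;
  eta_T0 : T0 ∘ eta unit = idm unit
}.
Arguments Tob {C} b X.
Arguments Tmor {C} b {X Y} f.
Arguments mu {C} b X.
Arguments eta {C} b X.
Arguments T2 {C} b X Y.
Arguments T0 {C} b.

Definition is_iso {C : StrictMonCat} {X Y : C} (f : hom X Y) : Prop :=
  exists g : hom Y X, g ∘ f = idm X /\ f ∘ g = idm Y.

Definition fusion_l {C : StrictMonCat} (B : Bimonad C) (X Y : C)
  : hom (Tob B (tens X (Tob B Y))) (tens (Tob B X) (Tob B Y)) :=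
  (idm (Tob B X) ⊗ mu B Y) ∘ T2 B X (Tob B Y).

Definition is_left_Hopf {C : StrictMonCat} (B : Bimonad C) : Prop :=
  forall X Y : C, is_iso (fusion_l B X Y).

Definition antipode_type {C : StrictMonCat} (L : LeftClosed C) (B : Bimonad C) :=
  forall X Y : C, hom (Tob B (ihom L (Tob B X) Y)) (ihom L X (Tob B Y)).

Definition is_left_antipode {C : StrictMonCat} (L : LeftClosed C) (B : Bimonad C)
  (s : antipode_type L B) : Prop :=
  (forall (X X' Y : C) (f : hom X' X),
      s X' Y ∘ Tmor B (ihom_map L (Tmor B f) (idm Y))
      = ihom_map L f (idm (Tob B Y)) ∘ s X Y) /\
  (forall (X Y Y' : C) (g : hom Y Y'),
      s X Y' ∘ Tmor B (ihom_map L (idm (Tob B X)) g)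
      = ihom_map L (idm X) (Tmor B g) ∘ s X Y) /\
  (forall X Y : C,
      Tmor B (ev L X Y ∘ (ihom_map L (eta B X) (idm Y) ⊗ idm X))
      = ev L (Tob B X) (Tob B Y)
        ∘ ((s (Tob B X) Y ∘ Tmor B (ihom_map L (mu B X) (idm Y))) ⊗ idm (Tob B X))
        ∘ T2 B (ihom L (Tob B X) Y) X) /\
  (forall X Y : C,
      ihom_map L (idm X) (idm (Tob B Y) ⊗ eta B X) ∘ coev L X (Tob B Y)
      = ihom_map L (idm X) ((idm (Tob B Y) ⊗ mu B X) ∘ T2 B Y (Tob B X))
        ∘ s X (tens Y (Tob B X)) ∘ Tmor B (coev L (Tob B X) Y)).
Arguments is_left_antipode {C} L B s.

(* Main.v *)
Require Import Defs.
From Stdlib Require Import ProofIrrelevance Setoid.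

Section Basics.
Context {C : StrictMonCat}.

Lemma cA {X Y Z W : C} (f : hom Z W) (g : hom Y Z) (h : hom X Y) :
  f ∘ (g ∘ h) = f ∘ g ∘ h.
Proof. apply comp_assoc. Qed.
Lemma idl {X Y : C} (f : hom X Y) : idm Y ∘ f = f.
Proof. apply comp_id_l. Qed.
Lemma idr {X Y : C} (f : hom X Y) : f ∘ idm X = f.
Proof. apply comp_id_r. Qed.
Lemma tcomp {X X' X'' Y Y' Y'' : C} (f : hom X' X'') (f' : hom X X')
  (g : hom Y' Y'') (g' : hom Y Y') : (f ∘ f') ⊗ (g ∘ g') = (f ⊗ g) ∘ (f' ⊗ g').
Proof. apply tensm_comp. Qed.
Lemma tid (X Y : C) : idm X ⊗ idm Y = idm (tens X Y).
Proof. apply tensm_id. Qed.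
Lemma tsl {X X' Y Y' : C} (f : hom X X') (g : hom Y Y') :
  f ⊗ g = (f ⊗ idm Y') ∘ (idm X ⊗ g).
Proof. rewrite <- tcomp, idl, idr. reflexivity. Qed.
Lemma tsr {X X' Y Y' : C} (f : hom X X') (g : hom Y Y') :
  f ⊗ g = (idm X' ⊗ g) ∘ (f ⊗ idm Y).
Proof. rewrite <- tcomp, idl, idr. reflexivity. Qed.
Lemma tcomm {X X' Y Y' : C} (f : hom X X') (g : hom Y Y') :
  (f ⊗ idm Y') ∘ (idm X ⊗ g) = (idm X' ⊗ g) ∘ (f ⊗ idm Y).
Proof. rewrite <- tsl, <- tsr. reflexivity. Qed.
Lemma tcl {X X' X'' Y : C} (f : hom X' X'') (f' : hom X X') :
  (f ∘ f') ⊗ idm Y = (f ⊗ idm Y) ∘ (f' ⊗ idm Y).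
Proof. rewrite <- tcomp, idl. reflexivity. Qed.
Lemma tcr {X Y Y' Y'' : C} (g : hom Y' Y'') (g' : hom Y Y') :
  idm X ⊗ (g ∘ g') = (idm X ⊗ g) ∘ (idm X ⊗ g').
Proof. rewrite <- tcomp, idl. reflexivity. Qed.

Lemma eqhom_refl (X : C) : eqhom (eq_refl X) = idm X.
Proof. reflexivity. Qed.
Lemma castH_eq {X X' Y Y' : C} (e1 : X = X') (e2 : Y = Y') (f : hom X Y) :
  castH e1 e2 f = eqhom e2 ∘ f ∘ eqhom (eq_sym e1).
Proof. destruct e1, e2. unfold eqhom; simpl. rewrite idl, idr. reflexivity. Qed.
Lemma eqhom_comp {X Y Z : C} (e1 : X = Y) (e2 : Y = Z) :
  eqhom e2 ∘ eqhom e1 = eqhom (eq_trans e1 e2).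
Proof. destruct e1, e2. simpl. apply idl. Qed.
Lemma eqhom_id {X : C} (e : X = X) : eqhom e = idm X.
Proof. rewrite (proof_irrelevance _ e eq_refl). reflexivity. Qed.
Lemma eqhom_K {X Y : C} (e : X = Y) (e' : Y = X) : eqhom e' ∘ eqhom e = idm X.
Proof. rewrite eqhom_comp. apply eqhom_id. Qed.
Lemma eqhom_Kr {X Y Z : C} (e : X = Y) (e' : Y = X) (f : hom Z X) :
  eqhom e' ∘ (eqhom e ∘ f) = f.
Proof. rewrite cA, eqhom_K. apply idl. Qed.
End Basics.
Section RW.
Context {C : StrictMonCat}.
Lemma rwl {X Y1 Y2 W : C} (x : hom Y2 W) (b : hom Y1 Y2) (c : hom X Y1) (d : hom X Y2) :
  b ∘ c = d -> x ∘ b ∘ c = x ∘ d.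
Proof. intros E. rewrite <- cA, E. reflexivity. Qed.
Lemma rwl2 {X Y1 Y2 Y3 W : C} (x : hom Y2 W) (b : hom Y1 Y2) (c : hom X Y1)
  (d : hom Y3 Y2) (e : hom X Y3) :
  b ∘ c = d ∘ e -> x ∘ b ∘ c = x ∘ d ∘ e.
Proof. intros E. rewrite <- !cA, E. reflexivity. Qed.
End RW.
Section RW3.
Context {C : StrictMonCat}.
Lemma rwl3 {X Y1 Y2 Y3 W : C} (x : hom Y3 W) (a : hom Y2 Y3) (b : hom Y1 Y2) (c : hom X Y1)
  (d : hom X Y3) : a ∘ b ∘ c = d -> x ∘ a ∘ b ∘ c = x ∘ d.
Proof. intros E. rewrite <- E, !cA. reflexivity. Qed.
End RW3.
Section ClosedL.
Context {C : StrictMonCat} (L : LeftClosed C).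

Definition flat {A X Y : C} (φ : hom A (ihom L X Y)) : hom (tens A X) Y :=
  ev L X Y ∘ (φ ⊗ idm X).

Lemma flat_inj {A X Y : C} (f g : hom A (ihom L X Y)) : flat f = flat g -> f = g.
Proof.
  intro H. rewrite <- (cur_uniq f), <- (cur_uniq g).
  unfold flat in H. rewrite H. reflexivity.
Qed.
Lemma flat_comp {A A' X Y : C} (φ : hom A (ihom L X Y)) (g : hom A' A) :
  flat (φ ∘ g) = flat φ ∘ (g ⊗ idm X).
Proof. unfold flat. rewrite tcl, cA. reflexivity. Qed.
Lemma flat_cur {A X Y : C} (f : hom (tens A X) Y) : flat (cur L f) = f.
Proof. unfold flat. apply cur_ev. Qed.
Lemma cur_flat {A X Y : C} (f : hom A (ihom L X Y)) : cur L (flat f) = f.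
Proof. unfold flat. apply cur_uniq. Qed.
Lemma flat_ihm0 {X X' Y Y' : C} (f : hom X' X) (g : hom Y Y') :
  flat (ihom_map L f g) = g ∘ ev L X Y ∘ (idm _ ⊗ f).
Proof. unfold ihom_map. apply flat_cur. Qed.
Lemma flat_ihm {A X X' Y Y' : C} (f : hom X' X) (g : hom Y Y') (φ : hom A (ihom L X Y)) :
  flat (ihom_map L f g ∘ φ) = g ∘ flat φ ∘ (idm A ⊗ f).
Proof.
  rewrite flat_comp, flat_ihm0. unfold flat.
  rewrite <- !cA. f_equal. f_equal. symmetry. apply tcomm.
Qed.
Lemma flat_id {X Y : C} : flat (idm (ihom L X Y)) = ev L X Y.
Proof. unfold flat. rewrite tid, idr. reflexivity. Qed.
Lemma flat_coev (X Y : C) : flat (coev L X Y) = idm (tens Y X).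
Proof. unfold coev. apply flat_cur. Qed.
End ClosedL.
Section Antipode.
Context {C : StrictMonCat} (L : LeftClosed C) (B : Bimonad C).
Local Notation T := (Tob B).
Local Notation Tm := (Tmor B).
Local Notation H := (fusion_l B).
Variable s : antipode_type L B.
Hypothesis Hs : is_left_antipode L B s.

Definition st (X Y : C) : hom (tens (T (ihom L (T X) Y)) X) (T Y) := flat L (s X Y).

Lemma natX (X X' Y : C) (f : hom X' X) :
  st X' Y ∘ (Tm (ihom_map L (Tm f) (idm Y)) ⊗ idm X') = st X Y ∘ (idm _ ⊗ f).
Proof.
  destruct Hs as [H1 _]. unfold st. rewrite <- flat_comp, H1, flat_ihm, idl.
  reflexivity.
Qed.

Lemma natY (X Y Y' : C) (g : hom Y Y') :
  st X Y' ∘ (Tm (ihom_map L (idm (T X)) g) ⊗ idm X) = Tm g ∘ st X Y.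
Proof.
  destruct Hs as [_ [H2 _]]. unfold st. rewrite <- flat_comp, H2, flat_ihm, tid, idr.
  reflexivity.
Qed.

Lemma ax1 (X Y : C) :
  Tm (ev L (T X) Y ∘ (idm _ ⊗ eta B X))
  = st (T X) Y ∘ (Tm (ihom_map L (mu B X) (idm Y)) ⊗ idm (T X)) ∘ T2 B (ihom L (T X) Y) X.
Proof.
  destruct Hs as [_ [_ [H3 _]]]. pose proof (H3 X Y) as E.
  assert (E' : ev L X Y ∘ (ihom_map L (eta B X) (idm Y) ⊗ idm X)
     = ev L (T X) Y ∘ (idm _ ⊗ eta B X)).
  { change (flat L (ihom_map L (eta B X) (idm Y)) = ev L (T X) Y ∘ (idm _ ⊗ eta B X)).
    rewrite flat_ihm0, idl. reflexivity. }
  rewrite E' in E. rewrite E. unfold st. rewrite <- flat_comp. reflexivity.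
Qed.

Lemma ax2 (X Y : C) :
  idm (T Y) ⊗ eta B X = H Y X ∘ st X (tens Y (T X)) ∘ (Tm (coev L (T X) Y) ⊗ idm X).
Proof.
  destruct Hs as [_ [_ [_ H4]]]. pose proof (f_equal (flat L) (H4 X Y)) as E.
  rewrite flat_ihm, flat_coev, idr, tid, idr in E. rewrite E.
  rewrite <- cA, flat_ihm, tid, idr, flat_comp. unfold st, fusion_l. apply cA.
Qed.

Definition cc (X Y : C) : hom X (ihom L (T (T Y)) (tens X (T Y))) :=
  cur L (idm X ⊗ mu B Y).
Definition G (X Y : C) : hom (tens (T X) (T Y)) (T (tens X (T Y))) :=
  st (T Y) (tens X (T Y)) ∘ (Tm (cc X Y) ⊗ idm (T Y)).

Lemma H_mu2 (X Y : C) :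
  H X Y ∘ Tm (idm X ⊗ mu B Y) = (idm _ ⊗ mu B Y) ∘ H X (T Y).
Proof.
  unfold fusion_l. rewrite <- !cA, T2_nat, Tmor_id, !cA, <- !tcr.
  rewrite mu_assoc. reflexivity.
Qed.

Lemma cc_coev (X Y : C) :
  cc X Y = ihom_map L (idm _) (idm X ⊗ mu B Y) ∘ coev L (T (T Y)) X.
Proof.
  apply flat_inj. rewrite flat_ihm, flat_coev, idr, tid, idr. unfold cc. apply flat_cur.
Qed.

Lemma HG (X Y : C) : H X Y ∘ G X Y = idm _.
Proof.
  unfold G. rewrite cc_coev, Tmor_comp, tcl, (cA (st _ _)), natY.
  rewrite !cA, H_mu2.
  transitivity ((idm (T X) ⊗ mu B Y) ∘ (H X (T Y) ∘ st (T Y) (tens X (T (T Y)))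
     ∘ (Tm (coev L (T (T Y)) X) ⊗ idm (T Y)))).
  { rewrite <- !cA. reflexivity. }
  rewrite <- ax2, <- tcomp, idl, mu_eta_l. apply tid.
Qed.
End Antipode.
Section Antipode2.
Context {C : StrictMonCat} (L : LeftClosed C) (B : Bimonad C).
Local Notation T := (Tob B).
Local Notation Tm := (Tmor B).
Local Notation H := (fusion_l B).
Variable s : antipode_type L B.
Hypothesis Hs : is_left_antipode L B s.
Local Notation st := (st L B s).
Local Notation G := (G L B s).
Local Notation cc := (cc L B).

Lemma cc_mu (X Y : C) :
  ihom_map L (Tm (mu B Y)) (idm _) ∘ cc X Y = ihom_map L (mu B (T Y)) (idm _) ∘ cc X Y.
Proof.
  apply flat_inj. rewrite !flat_ihm, !idl. unfold cc. rewrite flat_cur, <- !tcr, mu_assoc.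
  reflexivity.
Qed.

Lemma GH (X Y : C) : G X Y ∘ H X Y = idm _.
Proof.
  unfold G, fusion_l. rewrite !cA.
  rewrite (rwl2 _ _ _ _ _ (tcomm _ _)).
  rewrite <- (natX L B s Hs _ _ _ (mu B Y)).
  rewrite <- (cA _ _ (Tm (cc X Y) ⊗ _)), <- tcl, <- Tmor_comp, cc_mu.
  rewrite Tmor_comp, tcl, <- (Tmor_id B (T Y)), <- !cA, <- T2_nat, !cA.
  rewrite Tmor_id, <- ax1 by exact Hs. rewrite <- Tmor_comp.
  transitivity (Tm (idm (tens X (T Y)))); [f_equal | apply Tmor_id].
  rewrite <- cA, <- tcomm, cA.
  change (flat L (cc X Y) ∘ (idm X ⊗ eta B (T Y)) = idm (tens X (T Y))).
  unfold cc. rewrite flat_cur, <- tcr, mu_eta_l. apply tid.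
Qed.

Lemma S_aux1 {A X Y : C} (φ : hom A (ihom L (T X) Y)) :
  ihom_map L (idm _) (flat L φ) ∘ cc A X = ihom_map L (mu B X) (idm Y) ∘ φ.
Proof.
  apply flat_inj. rewrite !flat_ihm, tid, idr, idl. unfold cc. rewrite flat_cur.
  unfold flat. rewrite <- !cA. reflexivity.
Qed.
Lemma S_aux2 {A X Y : C} (φ : hom A (ihom L (T X) Y)) :
  ihom_map L (Tm (eta B X)) (idm Y) ∘ (ihom_map L (mu B X) (idm Y) ∘ φ) = φ.
Proof.
  apply flat_inj. rewrite !flat_ihm, !idl, <- cA, <- tcr, mu_eta_r, tid. apply idr.
Qed.

Lemma S (A X Y : C) (φ : hom A (ihom L (T X) Y)) :
  st X Y ∘ (Tm φ ⊗ idm X) = Tm (flat L φ) ∘ G A X ∘ (idm (T A) ⊗ eta B X).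
Proof.
  symmetry. unfold G. rewrite !cA, <- natY by exact Hs.
  rewrite (rwl _ _ _ _ (eq_sym (tcl _ _))), <- Tmor_comp, S_aux1.
  rewrite <- cA, tcomm, cA, <- natX by exact Hs.
  rewrite <- cA, <- tcl, <- Tmor_comp, S_aux2. reflexivity.
Qed.
End Antipode2.
Section Inv.
Context {C : StrictMonCat}.
Lemma conj_inv {X Y X' Y' : C} (h : hom X Y) (g : hom Y X) (h' : hom X' Y')
  (g' : hom Y' X') (a : hom X X') (b : hom Y Y') :
  h ∘ g = idm Y -> g' ∘ h' = idm X' -> h' ∘ a = b ∘ h -> a ∘ g = g' ∘ b.
Proof.
  intros E1 E2 E3.
  transitivity (g' ∘ h' ∘ a ∘ g). { rewrite E2, idl. reflexivity. }
  rewrite <- (cA g' h' a), E3, !cA, <- (cA _ h g), E1, idr. reflexivity.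
Qed.
End Inv.

Section Antipode3.
Context {C : StrictMonCat} (L : LeftClosed C) (B : Bimonad C).
Local Notation T := (Tob B).
Local Notation Tm := (Tmor B).
Local Notation H := (fusion_l B).
Variable s : antipode_type L B.
Hypothesis Hs : is_left_antipode L B s.
Local Notation st := (st L B s).
Local Notation G := (G L B s).

Lemma st_G (X Y : C) :
  st X Y = Tm (ev L (T X) Y) ∘ G (ihom L (T X) Y) X ∘ (idm _ ⊗ eta B X).
Proof.
  pose proof (S L B s Hs _ _ _ (idm (ihom L (T X) Y))) as E.
  rewrite Tmor_id, tid, idr, flat_id in E. exact E.
Qed.

Lemma H_eta (A X : C) : H A X ∘ eta B (tens A (T X)) = eta B A ⊗ idm (T X).
Proof.
  unfold fusion_l. rewrite <- cA, eta_T2, <- tcomp, idl, mu_eta_l. reflexivity.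
Qed.
Lemma G_eta (A X : C) : G A X ∘ (eta B A ⊗ idm (T X)) = eta B (tens A (T X)).
Proof.
  symmetry. rewrite <- (idr (eta B _)).
  apply (conj_inv (idm _) (idm _) (H A X) (G A X)).
  - apply idl.
  - apply (GH L B s Hs).
  - rewrite idr. apply H_eta.
Qed.

Lemma H_mu (A X : C) :
  H A X ∘ mu B (tens A (T X)) = (mu B A ⊗ idm _) ∘ H (T A) X ∘ Tm (H A X).
Proof.
  unfold fusion_l. rewrite <- cA, mu_T2, Tmor_comp, !cA.
  rewrite (rwl _ _ _ _ (T2_nat B _ _)), Tmor_id.
  rewrite !cA. rewrite <- !tcomp, !idl, !idr, mu_assoc. reflexivity.
Qed.
Lemma G_mu (A X : C) :
  G A X ∘ (mu B A ⊗ idm (T X)) = mu B _ ∘ Tm (G A X) ∘ G (T A) X.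
Proof.
  symmetry. rewrite <- cA.
  apply (conj_inv (H (T A) X ∘ Tm (H A X)) (Tm (G A X) ∘ G (T A) X) (H A X) (G A X)).
  - rewrite <- cA, (cA (Tm (H A X))), <- Tmor_comp, (HG L B s Hs), Tmor_id, idl.
    apply (HG L B s Hs).
  - apply (GH L B s Hs).
  - rewrite H_mu. symmetry. apply cA.
Qed.
Lemma G_mu2 (A X : C) :
  Tm (idm A ⊗ mu B X) ∘ G A (T X) = G A X ∘ (idm _ ⊗ mu B X).
Proof.
  apply (conj_inv (H A (T X)) (G A (T X)) (H A X) (G A X)).
  - apply (HG L B s Hs).
  - apply (GH L B s Hs).
  - apply H_mu2.
Qed.

Lemma flat_phi (X Y : C) :
  flat L (s (T X) Y ∘ Tm (ihom_map L (mu B X) (idm Y)))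
  = Tm (ev L (T X) Y) ∘ G (ihom L (T X) Y) X.
Proof.
  rewrite flat_comp. change (flat L (s (T X) Y)) with (st (T X) Y).
  rewrite (S L B s Hs), flat_ihm0, idl, Tmor_comp, <- (cA (Tm _) (Tm _)), G_mu2.
  rewrite <- !cA, <- tcr, mu_eta_l, tid, idr. reflexivity.
Qed.

Lemma b1 (X Y : C) :
  s X Y ∘ mu B (ihom L (T X) Y)
  = ihom_map L (idm X) (mu B Y) ∘ s X (T Y) ∘ Tm (s (T X) Y)
    ∘ Tm (Tm (ihom_map L (mu B X) (idm Y))).
Proof.
  apply flat_inj. rewrite <- !cA, <- Tmor_comp, flat_ihm, tid, idr, !flat_comp.
  change (flat L (s X (T Y))) with (st X (T Y)).
  change (flat L (s X Y)) with (st X Y).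
  rewrite (S L B s Hs), flat_phi, st_G.
  rewrite (rwl2 _ _ _ _ _ (eq_sym (tcomm _ _))), (rwl _ _ _ _ (G_mu _ _)).
  rewrite !Tmor_comp, !cA, mu_nat. reflexivity.
Qed.

Lemma b2 (X Y : C) :
  s X Y ∘ eta B (ihom L (T X) Y) = ihom_map L (eta B X) (eta B Y).
Proof.
  apply flat_inj. rewrite flat_comp, flat_ihm0.
  change (flat L (s X Y)) with (st X Y). rewrite st_G.
  rewrite (rwl2 _ _ _ _ _ (eq_sym (tcomm _ _))), (rwl _ _ _ _ (G_eta _ _)).
  rewrite eta_nat. reflexivity.
Qed.
End Antipode3.

Lemma uniq {C : StrictMonCat} (L : LeftClosed C) (B : Bimonad C)
  (s s' : antipode_type L B) :
  is_left_antipode L B s -> is_left_antipode L B s' ->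
  forall X Y : C, s X Y = s' X Y.
Proof.
  intros Hs Hs' X Y. apply flat_inj.
  change (st L B s X Y = st L B s' X Y). rewrite !st_G by assumption.
  replace (G L B s (ihom L (Tob B X) Y) X) with (G L B s' (ihom L (Tob B X) Y) X).
  reflexivity.
  transitivity (G L B s _ _ ∘ fusion_l B _ _ ∘ G L B s' (ihom L (Tob B X) Y) X).
  - rewrite (GH L B s Hs), idl. reflexivity.
  - rewrite <- cA, (HG L B s' Hs'), idr. reflexivity.
Qed.
Section B4.
Context {C : StrictMonCat} (L : LeftClosed C) (B : Bimonad C).
Local Notation T := (Tob B).
Local Notation Tm := (Tmor B).
Local Notation H := (fusion_l B).
Variable s : antipode_type L B.
Hypothesis Hs : is_left_antipode L B s.
Local Notation st := (st L B s).
Local Notation G := (G L B s).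

Lemma Tm_eqhom {X Y : C} (e : X = Y) : Tm (eqhom e) = eqhom (f_equal T e).
Proof. destruct e. simpl. apply Tmor_id. Qed.

Lemma eqhom_solve {X Y Z : C} (e : X = Y) (e' : Y = X) (f : hom Y Z) (g : hom X Z) :
  f ∘ eqhom e = g -> f = g ∘ eqhom e'.
Proof. intros E. rewrite <- E, <- cA, eqhom_K, idr. reflexivity. Qed.

Lemma ur_nat {W W' : C} (φ : hom W' W) :
  eqhom (eq_sym (tens_unit_r W)) ∘ φ = (φ ⊗ idm unit) ∘ eqhom (eq_sym (tens_unit_r W')).
Proof.
  pose proof (tensm_unit_r C W' W φ) as E. rewrite castH_eq in E.
  rewrite <- E at 1. rewrite !cA, eqhom_K, idl. reflexivity.
Qed.

Lemma counit_r_eq (X : C) :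
  eqhom (tens_unit_r (T X)) ∘ (idm (T X) ⊗ T0 B) ∘ T2 B X unit
  = eqhom (f_equal T (tens_unit_r X)).
Proof.
  pose proof (T2_counit_r B X) as E. rewrite castH_eq in E.
  transitivity (eqhom (tens_unit_r (T X)) ∘ ((idm (T X) ⊗ T0 B) ∘ T2 B X unit)
    ∘ eqhom (eq_sym (f_equal T (tens_unit_r X))) ∘ eqhom (f_equal T (tens_unit_r X))).
  { rewrite <- (cA _ (eqhom _)), eqhom_K, idr, cA. reflexivity. }
  rewrite E. apply idl.
Qed.

Lemma H_T0 (X : C) :
  (idm (T X) ⊗ T0 B) ∘ H X unit = (idm (T X) ⊗ T0 B) ∘ T2 B X unit ∘ Tm (idm X ⊗ T0 B).
Proof.
  unfold fusion_l. rewrite cA, <- tcr, mu_T0, tcr, <- !cA. f_equal.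
  rewrite T2_nat, Tmor_id. reflexivity.
Qed.

Lemma key_T0 (X : C) :
  Tm (eqhom (tens_unit_r X)) ∘ Tm (idm X ⊗ T0 B) ∘ G X unit
  = eqhom (tens_unit_r (T X)) ∘ (idm (T X) ⊗ T0 B).
Proof.
  rewrite Tm_eqhom, <- counit_r_eq, <- !cA. f_equal.
  rewrite !cA, <- H_T0, <- cA, (HG L B s Hs), idr. reflexivity.
Qed.

Lemma b4 (X : C) :
  ihom_unit L (T X) ∘ s unit X ∘ Tm (ihom_map L (T0 B) (idm X))
    ∘ Tm (ihom_unit_inv L X) = idm (T X).
Proof.
  unfold ihom_unit. rewrite <- !cA, <- Tmor_comp.
  rewrite ur_nat, cA.
  change (ev L unit (T X) ∘ ((s unit X ∘ Tm (ihom_map L (T0 B) (idm X) ∘ ihom_unit_inv L X))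
     ⊗ idm unit)) with (flat L (s unit X ∘ Tm (ihom_map L (T0 B) (idm X) ∘ ihom_unit_inv L X))).
  rewrite flat_comp. change (flat L (s unit X)) with (st unit X).
  rewrite (S L B s Hs), flat_ihm, idl. unfold ihom_unit_inv. rewrite flat_cur.
  rewrite Tmor_comp, key_T0, (rwl _ _ _ _ (eq_sym (tcr _ _))), eta_T0, tid, idr, eqhom_K.
  reflexivity.
Qed.
End B4.
Section B3a.
Context {C : StrictMonCat}.
Lemma assoc_nat {X X' Y Y' Z Z' : C} (f : hom X X') (g : hom Y Y') (h : hom Z Z') :
  eqhom (tens_assoc X' Y' Z') ∘ ((f ⊗ g) ⊗ h) = (f ⊗ (g ⊗ h)) ∘ eqhom (tens_assoc X Y Z).
Proof.
  pose proof (tensm_assoc C X X' Y Y' Z Z' f g h) as E. rewrite castH_eq in E.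
  rewrite <- E, <- cA, eqhom_K, idr. reflexivity.
Qed.
End B3a.

Section B3.
Context {C : StrictMonCat} (L : LeftClosed C) (B : Bimonad C).
Local Notation T := (Tob B).
Local Notation Tm := (Tmor B).
Local Notation H := (fusion_l B).
Variable s : antipode_type L B.
Hypothesis Hs : is_left_antipode L B s.
Local Notation st := (st L B s).
Local Notation G := (G L B s).

Lemma coassoc_eq (X Y Z : C) :
  eqhom (tens_assoc (T X) (T Y) (T Z)) ∘ (T2 B X Y ⊗ idm (T Z)) ∘ T2 B (tens X Y) Z
  = (idm (T X) ⊗ T2 B Y Z) ∘ T2 B X (tens Y Z) ∘ eqhom (f_equal T (tens_assoc X Y Z)).
Proof.
  pose proof (T2_coassoc B X Y Z) as E. rewrite castH_eq in E. rewrite <- E.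
  rewrite <- !cA, eqhom_K, idr. reflexivity.
Qed.

Lemma mix3 {X1 X2 X3 Y1 Y2 : C} (a : hom X2 X3) (b : hom X1 X2) (h : hom Y1 Y2) :
  (a ⊗ idm Y2) ∘ (b ⊗ idm Y2) ∘ (idm X1 ⊗ h) = (a ⊗ h) ∘ (b ⊗ idm Y1).
Proof. rewrite <- tcl, <- !tcomp, !idl, !idr. reflexivity. Qed.

Lemma eqT_K {X Y : C} (e : X = Y) : eqhom (f_equal T e) ∘ Tm (eqhom (eq_sym e)) = idm _.
Proof. rewrite Tm_eqhom. apply eqhom_K. Qed.

Definition PP (A X Y : C) : hom (T (tens A (tens (T X) (T Y)))) (tens (T A) (tens (T X) (T Y))) :=
  eqhom (tens_assoc (T A) (T X) (T Y)) ∘ (H A X ⊗ idm (T Y)) ∘ H (tens A (T X)) Y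
  ∘ Tm (eqhom (eq_sym (tens_assoc A (T X) (T Y)))).
Definition QQ (A X Y : C) : hom (tens (T A) (tens (T X) (T Y))) (T (tens A (tens (T X) (T Y)))) :=
  Tm (eqhom (tens_assoc A (T X) (T Y))) ∘ G (tens A (T X)) Y ∘ (G A X ⊗ idm (T Y))
  ∘ eqhom (eq_sym (tens_assoc (T A) (T X) (T Y))).

Lemma QP (A X Y : C) : QQ A X Y ∘ PP A X Y = idm _.
Proof.
  unfold QQ, PP. rewrite <- !cA.
  rewrite (cA (eqhom (eq_sym _))), eqhom_K, idl.
  rewrite (cA (_ ⊗ _) (_ ⊗ _)), <- tcl, (GH L B s Hs), tid, idl.
  rewrite (cA (G _ _)), (GH L B s Hs), idl, <- Tmor_comp, eqhom_K. apply Tmor_id.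
Qed.
Lemma PQ (A X Y : C) : PP A X Y ∘ QQ A X Y = idm _.
Proof.
  unfold QQ, PP. rewrite <- !cA.
  rewrite (cA (Tm _) (Tm _)), <- Tmor_comp, eqhom_K, Tmor_id, idl.
  rewrite (cA (H _ _)), (HG L B s Hs), idl.
  rewrite (cA (_ ⊗ _) (_ ⊗ _)), <- tcl, (HG L B s Hs), tid, idl. apply eqhom_K.
Qed.

Lemma HT2 (A X Y : C) :
  PP A X Y ∘ Tm (idm A ⊗ T2 B X Y) = (idm (T A) ⊗ T2 B X Y) ∘ H A (tens X Y).
Proof.
  unfold PP, fusion_l. rewrite tcl, !cA.
  rewrite (rwl3 _ _ _ _ _ (mix3 _ _ _)), !cA, assoc_nat.
  rewrite (rwl3 _ _ _ _ _ (coassoc_eq _ _ _)), !cA.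
  rewrite (rwl _ _ _ _ (eqT_K _)), idr.
  rewrite (rwl _ _ _ _ (T2_nat B _ _)), Tmor_id, !cA, <- !tcr, mu_T2. reflexivity.
Qed.

Lemma GT2 (A X Y : C) :
  Tm (idm A ⊗ T2 B X Y) ∘ G A (tens X Y) = QQ A X Y ∘ (idm (T A) ⊗ T2 B X Y).
Proof.
  apply (conj_inv (H A (tens X Y)) (G A (tens X Y)) (PP A X Y) (QQ A X Y)).
  - apply (HG L B s Hs).
  - apply QP.
  - apply HT2.
Qed.

Lemma b3 (X Y Z : C) :
  ihom_curry L X Y (T Z) ∘ s (tens X Y) Z ∘ Tm (ihom_map L (T2 B X Y) (idm Z))
  = ihom_map L (idm X) (s Y Z) ∘ s X (ihom L (T Y) Z)
    ∘ Tm (ihom_curry L (T X) (T Y) Z).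
Proof.
  apply flat_inj. apply flat_inj.
  rewrite <- !cA, flat_ihm, tid, idr.
  rewrite (flat_comp L (ihom_curry L X Y (T Z))), (flat_comp L (flat L (ihom_curry L X Y (T Z)))).
  unfold ihom_curry at 1. rewrite !flat_cur, <- cA, assoc_nat, tid, cA.
  change (ev L (tens X Y) (T Z) ∘ ((s (tens X Y) Z ∘ Tm (ihom_map L (T2 B X Y) (idm Z)))
    ⊗ idm (tens X Y))) with (flat L (s (tens X Y) Z ∘ Tm (ihom_map L (T2 B X Y) (idm Z)))).
  rewrite flat_comp. change (flat L (s (tens X Y) Z)) with (st (tens X Y) Z).
  rewrite (S L B s Hs), flat_ihm0, idl, Tmor_comp, (rwl _ _ _ _ (GT2 _ _ _)).
  rewrite !cA, (rwl _ _ _ _ (eq_sym (tcr _ _))), eta_T2.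
  unfold QQ. rewrite !cA, (rwl _ _ _ _ (eq_sym (assoc_nat _ _ _))), !cA.
  rewrite (rwl _ _ _ _ (eqhom_K _ _)), idr.
  rewrite flat_comp. change (flat L (s Y Z)) with (st Y Z).
  rewrite flat_comp. change (flat L (s X (ihom L (T Y) Z))) with (st X (ihom L (T Y) Z)).
  rewrite (S L B s Hs). unfold ihom_curry. rewrite flat_cur, !tcl, !cA.
  rewrite (S L B s Hs), flat_cur.
  rewrite (rwl2 _ _ _ _ _ (eq_sym (tcomm _ _))), (rwl _ _ _ _ (eq_sym (tsr _ _))).
  rewrite Tmor_comp. reflexivity.
Qed.
End B3.

Theorem mainTheorem7 :
  forall (C : StrictMonCat) (L : LeftClosed C) (B : Bimonad C),
    (* (a) uniqueness of the left antipode *)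
    (forall s s' : antipode_type L B,
        is_left_antipode L B s -> is_left_antipode L B s' ->
        forall X Y : C, s X Y = s' X Y) /\
    (* (b) properties of the left antipode of a left Hopf monad *)
    (is_left_Hopf B ->
     forall s : antipode_type L B, is_left_antipode L B s ->
       (forall X Y : C,
          s X Y ∘ mu B (ihom L (Tob B X) Y)
          = ihom_map L (idm X) (mu B Y) ∘ s X (Tob B Y) ∘ Tmor B (s (Tob B X) Y)
            ∘ Tmor B (Tmor B (ihom_map L (mu B X) (idm Y)))) /\
       (forall X Y : C,
          s X Y ∘ eta B (ihom L (Tob B X) Y) = ihom_map L (eta B X) (eta B Y)) /\
       (forall X Y Z : C,
          ihom_curry L X Y (Tob B Z) ∘ s (tens X Y) Z
            ∘ Tmor B (ihom_map L (T2 B X Y) (idm Z))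
          = ihom_map L (idm X) (s Y Z) ∘ s X (ihom L (Tob B Y) Z)
            ∘ Tmor B (ihom_curry L (Tob B X) (Tob B Y) Z)) /\
       (forall X : C,
          ihom_unit L (Tob B X) ∘ s unit X ∘ Tmor B (ihom_map L (T0 B) (idm X))
            ∘ Tmor B (ihom_unit_inv L X)
          = idm (Tob B X))).
Proof.
  intros C L B. split.
  - apply uniq.
  - intros _ s Hs. split; [|split; [|split]].
    + apply (b1 L B s Hs).
    + apply (b2 L B s Hs).
    + apply (b3 L B s Hs).
    + apply (b4 L B s Hs).
Qed.
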